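(* Let $\mathcal G$ be a braided stability groupoid and $l,m,n$ objects of $U\mathcal G$. Then the map $\mathrm{Hom}(m,l\oplus m)\to\mathrm{Hom}(m\oplus n,l\oplus m\oplus n)$, $\psi\mapsto\psi\oplus\mathrm{id}_n$, is injective, and its image is $\{\chi\in\mathrm{Hom}(m\oplus n,l\oplus m\oplus n)\mid\chi\circ(\iota_m\oplus\mathrm{id}_n)=\iota_{l\oplus m}\oplus\mathrm{id}_n\}$.
   Context: Stability groupoid: a monoidal groupoid $(\mathcal G,\oplus,0)$ with objects $(\mathbb N,+,0)$, $G_n=\mathrm{Aut}(n)$, such that $\oplus\colon G_m\times G_n\to G_{m+n}$ is injective, $G_0$ is trivial, and $(G_{l+m}\times1)\cap(1\times G_{m+n})=1\times G_m\times1$ in $G_{l+m+n}$; braided: equipped with a braiding $b_{m,n}\in G_{m+n}$ of the monoidal groupoid. $U\mathcal G$: objects $\mathbb N$, $\mathrm{Hom}(m,n)=G_n/G_{n-m}$ for $m\le n$ ($G_{n-m}\subset G_n$ via $g\mapsto g\oplus\mathrm{id}_m$), empty otherwise; composition $fG_l\circ gG_m=f(\mathrm{id}_l\oplus g)G_{l+m}$; monoidal structure $f_1G_{m_1}\oplus f_2G_{m_2}=(f_1\oplus f_2)(\mathrm{id}_{m_1}\oplus b^{-1}_{n_1,m_2}\oplus\mathrm{id}_{n_2})G_{m_1+m_2}$ for $f_jG_{m_j}\colon n_j\to m_j+n_j$. The unit $0$ is initial; $\iota_m\colon0\to m$ is the unique morphism. *)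

(* Defs.v *)
(* A braided stability groupoid, presented as
   a family of groups G n = Aut(n), n : nat, with a strict monoidal product
   and a braiding; and the category UG with morphisms given by cosets. *)
From mathcomp Require Import all_boot zify.
Set Implicit Arguments. Unset Strict Implicit. Unset Printing Implicit Defensive.

(* Composition convention: [mul n x y] = x o y (first y, then x). *)
Record BraidedStabilityGroupoid := {
  gG : nat -> Type;
  mul : forall n, gG n -> gG n -> gG n;
  one : forall n, gG n;
  inv : forall n, gG n -> gG n;
  mulA : forall n (x y z : gG n), mul x (mul y z) = mul (mul x y) z;
  mul1g : forall n (x : gG n), mul (one n) x = x;
  mulg1 : forall n (x : gG n), mul x (one n) = x;
  mulVg : forall n (x : gG n), mul (inv x) x = one n;
  mulgV : forall n (x : gG n), mul x (inv x) = one n;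
  oplus : forall m n, gG m -> gG n -> gG (m + n);
  oplus_mul : forall m n (g g' : gG m) (h h' : gG n),
    oplus (mul g g') (mul h h') = mul (oplus g h) (oplus g' h');
  oplus_one : forall m n, oplus (one m) (one n) = one (m + n);
  oplusA : forall m n p (g : gG m) (h : gG n) (k : gG p),
    eq_rect _ gG (oplus g (oplus h k)) _ (addnA m n p) = oplus (oplus g h) k;
  oplus0l : forall n (g : gG n), eq_rect _ gG (oplus (one 0) g) _ (add0n n) = g;
  oplus0r : forall n (g : gG n), eq_rect _ gG (oplus g (one 0)) _ (addn0 n) = g;
  oplus_inj : forall m n (g g' : gG m) (h h' : gG n),
    oplus g h = oplus g' h' -> g = g' /\ h = h';
  G0_trivial : forall g : gG 0, g = one 0;
  intersection : forall l m n (x : gG (l + m + n)),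
    ((exists g : gG (l + m), x = oplus g (one n)) /\
     (exists h : gG (m + n), x = eq_rect _ gG (oplus (one l) h) _ (addnA l m n)))
    <-> (exists k : gG m, x = oplus (oplus (one l) k) (one n));
  (* braiding b_{m,n} : m (+) n -> n (+) m, an element of G_{m+n} *)
  braid : forall m n, gG (m + n);
  braid_nat : forall m n (g : gG m) (h : gG n),
    mul (braid m n) (oplus g h)
    = mul (eq_rect _ gG (oplus h g) _ (addnC n m)) (braid m n);
  braid_hex1 : forall l m n,
    braid l (m + n)
    = mul (eq_rect _ gG (oplus (one m) (braid l n)) _ (addnCA m l n))
          (eq_rect _ gG (oplus (braid l m) (one n)) _ (esym (addnA l m n)));
  braid_hex2 : forall l m n,
    braid (l + m) n
    = mul (eq_rect _ gG (oplus (braid l n) (one m)) _ (addnAC l n m))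
          (eq_rect _ gG (oplus (one l) (braid m n)) _ (addnA l m n))
}.

Arguments mul {b n}. Arguments one {b}. Arguments inv {b n}.
Arguments oplus {b m n}. Arguments braid {b}.

Section UG.
Variable S : BraidedStabilityGroupoid.
Local Notation G := (gG S).

Definition castG m n (e : m = n) (x : G m) : G n := eq_rect m G x n e.

(* A morphism m -> n of UG (m <= n), represented by f in G_n standing for
   the coset f G_{n-m}. *)
Record UMor (m n : nat) := { ule : m <= n; urep : G n }.

Definition incl m n (H : m <= n) (g : G (n - m)) : G n :=
  castG (subnK H) (oplus g (one m)).

(* equality in Hom(m,n) = G_n / G_{n-m} (equality of left cosets) *)
Definition ueq m n (f f' : UMor m n) : Prop :=
  exists g : G (n - m), urep f' = mul (urep f) (incl (ule f) g).

Definition uid n : UMor n n := {| ule := leqnn n; urep := one n |}.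

Definition uiota m : UMor 0 m := {| ule := leq0n m; urep := one m |}.

Lemma comp_eq (a b c : nat) : b <= c -> (c - b) + b = c.
Proof. exact: subnK. Qed.

(* f G_l o g G_m = f (id_l (+) g) G_{l+m} *)
Definition ucomp (a b c : nat) (f : UMor b c) (g : UMor a b) : UMor a c :=
  {| ule := leq_trans (ule g) (ule f);
     urep := mul (urep f) (castG (subnK (ule f)) (oplus (one (c - b)) (urep g))) |}.

Lemma uplus_eq (n1 p1 n2 p2 : nat) : n1 <= p1 -> n2 <= p2 ->
  (p1 - n1) + (n1 + (p2 - n2)) + n2 = p1 + p2.
Proof.
move=> h1 h2; lia.
Qed.

(* f1 G_{m1} (+) f2 G_{m2}
     = (f1 (+) f2)(id_{m1} (+) b^{-1}_{n1,m2} (+) id_{n2}) G_{m1+m2} *)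
Definition uplus (n1 p1 n2 p2 : nat) (f1 : UMor n1 p1) (f2 : UMor n2 p2)
  : UMor (n1 + n2) (p1 + p2) :=
  {| ule := leq_add (ule f1) (ule f2);
     urep := mul (oplus (urep f1) (urep f2))
               (castG (uplus_eq (ule f1) (ule f2))
                  (oplus (oplus (one (p1 - n1)) (inv (braid n1 (p2 - n2))))
                         (one n2))) |}.

End UG.

(* Main.v *)
From mathcomp Require Import all_boot zify.
Require Import Defs.
Set Implicit Arguments. Unset Strict Implicit. Unset Printing Implicit Defensive.

Section Helpers.
Variable S : BraidedStabilityGroupoid.
Local Notation G := (gG S).

Lemma castG_id n (e : n = n) (x : G n) : castG e x = x.
Proof. by rewrite (eq_axiomK e). Qed.

Lemma castG_irr m n (e e' : m = n) (x : G m) : castG e x = castG e' x.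
Proof. by rewrite (eq_irrelevance e e'). Qed.

Lemma castG_comp m n p (e1 : m = n) (e2 : n = p) (x : G m) :
  castG e2 (castG e1 x) = castG (etrans e1 e2) x.
Proof. by destruct e2; destruct e1. Qed.

Lemma castG_one m n (e : m = n) : castG e (one m : G m) = one n.
Proof. by destruct e. Qed.

Lemma castG_inv m n (e : m = n) (x : G m) : castG e (inv x) = inv (castG e x).
Proof. by destruct e. Qed.

Lemma oplus_castl a a' b (e : a = a') (x : G a) (y : G b) :
  oplus (castG e x) y = castG (f_equal (addn^~ b) e) (oplus x y).
Proof. destruct e. by rewrite !castG_id. Qed.

Lemma inv_unique n (x y : G n) : mul x y = one n -> x = inv y.
Proof.
move=> H; rewrite -(mulg1 x) -(mulgV y) mulA H mul1g //.
Qed.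

Lemma inv_one n : inv (one n : G n) = one n.
Proof. by symmetry; apply: inv_unique; rewrite mulg1. Qed.

Lemma oplus_inv a b (x : G a) (y : G b) : inv (oplus x y) = oplus (inv x) (inv y).
Proof. by symmetry; apply: inv_unique; rewrite -oplus_mul !mulVg oplus_one. Qed.

Lemma idem_one n (x : G n) : mul x x = x -> x = one n.
Proof.
move=> H; have := f_equal (mul (inv x)) H.
by rewrite mulA mulVg mul1g.
Qed.

Lemma braid_a0 a : braid a 0 = one (a + 0) :> G (a + 0).
Proof.
have H := braid_hex1 S a 0 0.
have E1 : eq_rect _ G (oplus (one 0) (braid a 0)) _ (addnCA 0 a 0) = braid a 0.
  by rewrite -[RHS](oplus0l (braid a 0)); apply: castG_irr.
have E2 : eq_rect _ G (oplus (braid a 0) (one 0)) _ (esym (addnA a 0 0)) = braid a 0.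
  by rewrite -[RHS](oplus0r (braid a 0)); apply: castG_irr.
rewrite E1 E2 in H.
by apply: idem_one; exact: (esym H).
Qed.

Lemma braid_k0 a k (e : k = 0) : braid a k = one (a + k) :> G (a + k).
Proof. by subst k; exact: braid_a0. Qed.

Lemma uplus_id_rep n a b (f : UMor S a b) :
  urep (uplus f (uid S n)) = oplus (urep f) (one n).
Proof.
rewrite /= (braid_k0 a (subnn n)) inv_one !oplus_one castG_one mulg1 //.
Qed.

Lemma key k k' m n L (d : k = k') (g : G k) (E1 : k' + m = L)
  (E2 : k + (m + n) = L + n) :
  oplus (castG E1 (oplus (castG d g) (one m))) (one n)
  = castG E2 (oplus g (one (m + n))).
Proof.
subst k' L; rewrite !castG_id -oplusA oplus_one; apply: castG_irr.
Qed.

Lemma mul_incl_n l m n (le1 : m <= l + m)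
  (E : l + m + n - (m + n) + (m + n) = l + m + n)
  (d : l + m + n - (m + n) = l + m - m) (f : G (l + m)) g :
  mul (oplus f (one n)) (castG E (oplus g (one (m + n))))
  = oplus (mul f (castG (subnK le1) (oplus (castG d g) (one m)))) (one n).
Proof.
by rewrite -[in RHS](mulg1 (one n)) oplus_mul (key _ _ _ E).
Qed.

End Helpers.

Theorem proposition4p1 (S : BraidedStabilityGroupoid) (l m n : nat) :
  (forall psi psi' : UMor S m (l + m),
      ueq (uplus psi (uid S n)) (uplus psi' (uid S n)) -> ueq psi psi')
  /\
  (forall chi : UMor S (m + n) (l + m + n),
      (exists psi : UMor S m (l + m), ueq (uplus psi (uid S n)) chi)
      <-> ueq (ucomp chi (uplus (uiota S m) (uid S n)))
              (uplus (uiota S (l + m)) (uid S n))).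
Proof.
have d : l + m + n - (m + n) = l + m - m by lia.
split.
  move=> [le1 f] [le1' f'] [g Hg].
  rewrite !uplus_id_rep /= /incl /= in Hg.
  exists (castG d g); rewrite /incl /=.
  apply: (proj1 (oplus_inj (h := one n) (h' := one n) _)).
  by rewrite Hg mul_incl_n (bool_irrelevance le1' le1).
move=> [lec x]; split.
  move=> [[le1 f] [g Hg]].
  rewrite uplus_id_rep /= /incl /= in Hg.
  rewrite /ueq /= !(@braid_k0 _ _ _ (subnn n)) !inv_one !oplus_one !castG_one !mulg1 /incl /=.
  rewrite Hg (mul_incl_n _ _ d).
  set h := mul f _.
  have d2 : l + m = l + m + n - (0 + n) by lia.
  exists (castG d2 (inv h)); rewrite /incl /=.
  rewrite !oplus_one !castG_one !mulg1 oplus_castl castG_comp castG_id.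
  by rewrite -oplus_mul mulgV mulg1 oplus_one.
move=> [g2 Hg2].
rewrite /= !(@braid_k0 _ _ _ (subnn n)) !inv_one !oplus_one !castG_one !mulg1 !oplus_one !castG_one !mulg1 /incl /= in Hg2.
have d3 : l + m + n - (0 + n) = l + m by lia.
exists {| ule := leq_addl l m; urep := castG d3 (inv g2) |}.
exists (one _); rewrite uplus_id_rep /= /incl /= oplus_one castG_one mulg1.
rewrite (inv_unique (esym Hg2)) -castG_inv oplus_inv inv_one.
rewrite oplus_castl; apply: castG_irr.
Qed.
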